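(* Let $m$ be a positive integer. Every $2^m(2^{m+1}+1)^{m+2}$-$T_0T^\ast$-perfect number $n>1$ has the form $p_1^{2^{m+1}(2^{m+1}+1)^{m+2}-1}$ for a prime $p_1$, or the form $p_1\cdots p_{m+2}$ for distinct primes $p_1,\dots,p_{m+2}$.
   Context: For a positive integer $m'$, $T(m')$ denotes the product of all positive divisors of $m'$, and $T^\ast(m')$ the product of all unitary divisors of $m'$ (divisors $d$ with $\gcd(d,m'/d)=1$). For an integer $K\ge 2$, an integer $n>1$ is called $K$-$T_0T^\ast$-perfect if $T(T^\ast(n))=n^K$. *)

(* Defs.v *)
From mathcomp Require Import all_boot.
Set Implicit Arguments. Unset Strict Implicit. Unset Printing Implicit Defensive.

Definition prod_divisors (m : nat) : nat := \prod_(d <- divisors m) d.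

Definition prod_unitary_divisors (m : nat) : nat :=
  \prod_(d <- divisors m | coprime d (m %/ d)) d.

Definition K_T0Tstar_perfect (K n : nat) : Prop :=
  1 < n /\ prod_divisors (prod_unitary_divisors n) = n ^ K.

(* Main.v *)
Require Import Defs.
From mathcomp Require Import all_boot.
Set Implicit Arguments. Unset Strict Implicit. Unset Printing Implicit Defensive.

Lemma divKK N d : 0 < N -> d %| N -> N %/ (N %/ d) = d.
Proof.
move=> N0 dN; have Nd0 : 0 < N %/ d.
  have d0 : 0 < d.
    move: dN; case: d => // ; rewrite dvd0n => /eqP E; by rewrite E in N0.
  by rewrite divn_gt0 // dvdn_leq.
by rewrite -{1}(divnK dN) mulKn.
Qed.

Lemma prodn_const_seq (r : seq nat) c : \prod_(x <- r) c = c ^ size r.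
Proof. elim: r => [|x r IH]; first by rewrite big_nil.
by rewrite big_cons IH expnS. Qed.
Lemma prod_pair N (P : pred nat) : 0 < N ->
  (forall d, d %| N -> P (N %/ d) = P d) ->
  (\prod_(d <- divisors N | P d) d) ^ 2 = N ^ (count P (divisors N)).
Proof.
move=> N0 HP; rewrite -big_filter -size_filter.
set D := filter P (divisors N).
have memD x : (x \in D) = (x %| N) && P x by rewrite mem_filter andbC -dvdn_divisors.
have hperm : perm_eq D (map (fun d => N %/ d) D).
  apply: uniq_perm.
  - exact: filter_uniq (divisors_uniq N).
  - rewrite map_inj_in_uniq ?filter_uniq ?divisors_uniq // => x y.
    rewrite !memD => /andP[xN _] /andP[yN _] E.
    by rewrite -(divKK N0 xN) E divKK.
  - move=> x; apply/idP/mapP.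
      rewrite memD => /andP[xN Px]; exists (N %/ x); last by rewrite divKK.
      by rewrite memD dvdn_div // HP.
    by move=> [y]; rewrite memD => /andP[yN Py] ->; rewrite memD dvdn_div // HP.
rewrite expnS expn1 {2}(perm_big _ hperm) big_map -big_split /=.
rewrite (eq_big_seq (fun _ => N)) ?prodn_const_seq // => x.
by rewrite memD => /andP[xN _]; rewrite mulnC divnK.
Qed.

Lemma size_add_divisors f divs :
  size (PrimeDecompAux.add_divisors f divs) = f.2.+1 * size divs.
Proof.
case: f => p e /=; rewrite /PrimeDecompAux.add_divisors.
elim: e => [|e IH] /=; first by rewrite mul1n.
by rewrite size_merge size_cat size_map IH mulSn addnC.
Qed.

Lemma size_divisors n : 0 < n ->
  size (divisors n) = \prod_(p <- primes n) (logn p n).+1.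
Proof.
move=> n0; rewrite /divisors prime_decompE.
elim: (primes n) => [|p r IH]; first by rewrite big_nil.
rewrite big_cons -IH /=; exact: (size_add_divisors (p, logn p n)).
Qed.

Lemma gcd_split d a b : coprime a b -> d %| a * b -> d = gcdn d a * gcdn d b.
Proof.
move=> cab dab.
have cg : coprime (gcdn d a) (gcdn d b).
  exact: (coprime_dvdl (dvdn_gcdr d a) (coprime_dvdr (dvdn_gcdr d b) cab)).
apply/eqP; rewrite eqn_dvd; apply/andP; split; last first.
  by rewrite Gauss_dvd // !dvdn_gcdl.
rewrite muln_gcdl !muln_gcdr !dvdn_gcd dab andbT.
by rewrite -andbA; apply/and3P; split; [apply: dvdn_mulr|apply: dvdn_mulr|apply: dvdn_mull].
Qed.

Lemma divisors_coprime a b : 0 < a -> 0 < b -> coprime a b ->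
  perm_eq (divisors (a * b)) [seq x * y | x <- divisors a, y <- divisors b].
Proof.
move=> a0 b0 cab; have cba : coprime b a by rewrite coprime_sym.
have ab0 : 0 < a * b by rewrite muln_gt0 a0.
apply: uniq_perm; first exact: divisors_uniq.
  apply: allpairs_uniq; try exact: divisors_uniq.
  move=> [x1 y1] [x2 y2] /allpairsPdep[x1' [y1' [H1x H1y [E1 E2]]]] /allpairsPdep[x2' [y2' [H2x H2y [E3 E4]]]] /= E.
  subst x1' y1' x2' y2'.
  move: H1x H1y H2x H2y; rewrite -!dvdn_divisors // => H1x H1y H2x H2y.
  have ex1 : gcdn (x1 * y1) a = x1.
    by rewrite gcdnC Gauss_gcdl; [apply/gcdn_idPr | exact: coprime_dvdr H1y cab].
  have ex2 : gcdn (x2 * y2) a = x2.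
    by rewrite gcdnC Gauss_gcdl; [apply/gcdn_idPr | exact: coprime_dvdr H2y cab].
  have ey1 : gcdn (x1 * y1) b = y1.
    by rewrite gcdnC Gauss_gcdr; [apply/gcdn_idPr | exact: coprime_dvdr H1x cba].
  have ey2 : gcdn (x2 * y2) b = y2.
    by rewrite gcdnC Gauss_gcdr; [apply/gcdn_idPr | exact: coprime_dvdr H2x cba].
  by congr pair; [rewrite -ex1 E ex2 | rewrite -ey1 E ey2].
move=> d; apply/idP/allpairsP.
  rewrite -dvdn_divisors // => dab.
  exists (gcdn d a, gcdn d b) => /=; split.
  - by rewrite -dvdn_divisors // dvdn_gcdr.
  - by rewrite -dvdn_divisors // dvdn_gcdr.
  - exact: gcd_split.
move=> [[x y] /= [Hx Hy ->]]; move: Hx Hy; rewrite -!dvdn_divisors // => Hx Hy.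
by rewrite dvdn_mul.
Qed.

Definition ucount n := count (fun d => coprime d (n %/ d)) (divisors n).

Lemma count_sum (T : Type) (P : pred T) (s : seq T) : count P s = \sum_(x <- s) P x.
Proof. by elim: s => [|x s IH]; rewrite ?big_nil ?big_cons //= IH. Qed.

Lemma coprime_split a b x y : 0 < a -> 0 < b -> coprime a b -> x %| a -> y %| b ->
  coprime (x * y) (a * b %/ (x * y)) = coprime x (a %/ x) && coprime y (b %/ y).
Proof.
move=> a0 b0 cab xa yb.
have x0 : 0 < x by move: xa; case: x => //; rewrite dvd0n => /eqP E; rewrite E in a0.
have y0 : 0 < y by move: yb; case: y => //; rewrite dvd0n => /eqP E; rewrite E in b0.
have -> : a * b %/ (x * y) = (a %/ x) * (b %/ y).
  by rewrite -{1}(divnK xa) -{1}(divnK yb) mulnACA mulnK // muln_gt0 x0.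
have c1 : coprime x (b %/ y).
  exact: coprime_dvdl xa (coprime_dvdr (dvdn_div yb) cab).
have c2 : coprime y (a %/ x).
  by rewrite coprime_sym; exact: coprime_dvdl (dvdn_div xa) (coprime_dvdr yb cab).
by rewrite coprimeMl !coprimeMr c1 c2 andbT /=.
Qed.

Lemma ucountM a b : 0 < a -> 0 < b -> coprime a b -> ucount (a * b) = ucount a * ucount b.
Proof.
move=> a0 b0 cab; rewrite /ucount (permP (divisors_coprime a0 b0 cab)) !count_sum.
rewrite big_allpairs_dep big_distrl /=; apply: eq_big_seq => x xa.
rewrite big_distrr /=; apply: eq_big_seq => y yb.
move: xa yb; rewrite -!dvdn_divisors // => xa yb.
by rewrite coprime_split // mulnb.
Qed.

Lemma ucount1 : ucount 1 = 1.
Proof. by []. Qed.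

Lemma ucount_pow p k : prime p -> 0 < k -> ucount (p ^ k) = 2.
Proof.
move=> pp k0; have p1 := prime_gt1 pp; have p0 := prime_gt0 pp.
have pk0 : 0 < p ^ k by rewrite expn_gt0 p0.
have pk1 : 1 < p ^ k by rewrite -(expn0 p) ltn_exp2l.
rewrite /ucount -size_filter.
have -> : 2 = size [:: 1; p ^ k] by [].
apply: perm_size; apply: uniq_perm.
- exact: filter_uniq (divisors_uniq _).
- rewrite /= inE andbT; apply/negP => /eqP E; by rewrite -E in pk1.
move=> d; rewrite mem_filter -dvdn_divisors // !inE.
apply/andP/orP.
  move=> [cd /(dvdn_pfactor _ _ pp) [i ik di]]; subst d.
  rewrite -expnB // in cd.
  have [i0|i0] := posnP i; first by left; rewrite i0.
  have [ki|ki] := posnP (k - i).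
    by right; have -> : i = k by apply/eqP; rewrite eqn_leq ik -subn_eq0 ki.
  by move: cd; rewrite coprime_pexpl // coprime_pexpr // /coprime gcdnn => /eqP E; rewrite E in p1.
case=> /eqP ->; first by rewrite dvd1n coprime1n.
by rewrite dvdnn divnn pk0 coprimen1.
Qed.

Lemma ucount_primes n : 0 < n -> ucount n = 2 ^ size (primes n).
Proof.
elim/ltn_ind: n => n IH n0.
have [n1|n1] := leqP n 1.
  by have -> : n = 1 by apply/eqP; rewrite eqn_leq n1 n0.
set p := pdiv n; have pp : prime p := pdiv_prime n1.
have pin : p \in primes n by rewrite -pi_pdiv in n1.
have cab : coprime n`_p n`_p^' := coprime_partC _ _ _.
have defn : n`_p * n`_p^' = n := partnC _ n0.
have la : 0 < logn p n by rewrite logn_gt0.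
have a1 : 1 < n`_p by rewrite p_part -(expn0 p) ltn_exp2l ?prime_gt1.
have bn : n`_p^' < n.
  by rewrite -{2}defn ltn_Pmull.
rewrite -{1}defn ucountM ?part_gt0 // (IH _ bn (part_gt0 _ _)) p_part ucount_pow //.
rewrite primes_part size_filter -expnS; congr (2 ^ _).
rewrite -(count_predC (pred1 p)) (count_uniq_mem _ (primes_uniq n)) pin add1n.
congr (_.+1); apply: eq_count => q; by rewrite !inE.
Qed.

Lemma Tstar_sq n : 0 < n -> prod_unitary_divisors n ^ 2 = n ^ (2 ^ size (primes n)).
Proof.
move=> n0; rewrite /prod_unitary_divisors prod_pair //.
  by rewrite -ucount_primes.
by move=> d dn; rewrite divKK // coprime_sym.
Qed.

Lemma T_sq N : 0 < N -> prod_divisors N ^ 2 = N ^ size (divisors N).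
Proof.
move=> N0; rewrite /prod_divisors -(count_predT (divisors N)) -(prod_pair (P := predT)) //.
Qed.

Lemma prod_ge_pow (r : seq nat) f c : (forall x, x \in r -> c <= f x) ->
  c ^ size r <= \prod_(x <- r) f x.
Proof.
elim: r => [|x r IH] H; first by rewrite big_nil.
rewrite big_cons expnS leq_mul ?H ?mem_head // IH // => y yr.
by rewrite H // inE yr orbT.
Qed.

Lemma prod_eq_pow (r : seq nat) f c : 0 < c -> (forall x, x \in r -> c <= f x) ->
  \prod_(x <- r) f x = c ^ size r -> forall x, x \in r -> f x = c.
Proof.
move=> c0; elim: r => [|x r IH] H E y //.
have Hr : forall z, z \in r -> c <= f z by move=> z zr; rewrite H // inE zr orbT.
have fx : f x = c.
  apply/eqP; rewrite eqn_leq H ?mem_head // andbT leqNgt; apply/negP => lt.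
  have : c * c ^ size r < f x * \prod_(z <- r) f z.
    by apply: (leq_trans _ (leq_mul lt (prod_ge_pow Hr))); rewrite mulSn -[X in X < _]add0n ltn_add2r expn_gt0 c0.
  by move: E; rewrite big_cons => ->; rewrite expnS ltnn.
move: E; rewrite big_cons fx /= expnS => /eqP; rewrite eqn_pmul2l // => /eqP E.
by rewrite inE => /orP[/eqP -> // | yr]; apply: IH.
Qed.

Lemma two_adic a b x y : odd x -> odd y -> 2 ^ a * x = 2 ^ b * y -> a = b.
Proof.
move=> ox oy E; have := congr1 (logn 2) E.
rewrite lognM ?expn_gt0 ?(odd_gt0 ox) // lognM ?expn_gt0 ?(odd_gt0 oy) // !pfactorK // !logn_coprime ?coprime2n //.
by rewrite !addn0.
Qed.

Theorem mainTheorem13 (m n : nat) :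
  0 < m ->
  K_T0Tstar_perfect (2 ^ m * (2 ^ m.+1 + 1) ^ (m + 2)) n ->
  (exists p1 : nat, prime p1 /\ n = p1 ^ (2 ^ m.+1 * (2 ^ m.+1 + 1) ^ (m + 2) - 1))
  \/
  (exists ps : seq nat, size ps = m + 2 /\ uniq ps /\ all prime ps /\
     n = \prod_(p <- ps) p).
Proof.
move=> m0 [n1 H].
have n0 : 0 < n by apply: ltnW.
set c := 2 ^ m.+1 + 1.
set K := 2 ^ m * c ^ (m + 2) in H.
have K2 : K * 2 = 2 ^ m.+1 * c ^ (m + 2) by rewrite /K mulnAC -expnSr.
set s := size (primes n).
have s0 : 0 < s by rewrite lt0n size_eq0 primes_eq0 -leqNgt.
set t := 2 ^ (s - 1).
have t0 : 0 < t by rewrite expn_gt0.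
have Ns : prod_unitary_divisors n = n ^ t.
  apply: (@expIn 2) => //; rewrite Tstar_sq // -expnM; congr (n ^ _).
  by rewrite /t -expnSr subn1 prednK.
have E : (n ^ K) ^ 2 = (n ^ t) ^ size (divisors (n ^ t)).
  by rewrite -H Ns T_sq // expn_gt0 n0.
rewrite -!expnM in E; have E2 := expnI n1 E.
have E3 : K * 2 = t * \prod_(p <- primes n) (t * logn p n).+1.
  rewrite E2 size_divisors ?expn_gt0 ?n0 // primesX //; congr (_ * _).
  by apply: eq_bigr => p _; rewrite lognX.
have defn : n = \prod_(p <- primes n) p ^ logn p n.
  by rewrite {1}(prod_prime_decomp n0) prime_decompE big_map.
have [s1|s1] := leqP s 1.
  left; have s1' : s = 1 by apply/eqP; rewrite eqn_leq s1 s0.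
  have t1 : t = 1 by rewrite /t s1'.
  move: E3 defn (all_prime_primes n); rewrite t1 /s in s1' *.
  case: (primes n) s1' => [|p [|q r]] //= _.
  rewrite !big_seq1 mul1n K2 andbT => E3 defn pp.
  exists p; split => //; by rewrite {1}defn E3 subn1 /= mul1n.
have todd : ~~ odd t by rewrite /t oddX orbF subn_eq0 -ltnNge s1.
have podd : odd (\prod_(p <- primes n) (t * logn p n).+1).
  elim/big_ind: _ => // [x y ox oy|p _]; first by rewrite oddM ox oy.
  by rewrite /= oddM (negbTE todd).
have codd : odd c by rewrite /c oddD oddX.
have ms : m.+1 = s - 1.
  have cpodd : odd (c ^ (m + 2)) by rewrite oddX codd orbT.
  by apply: (two_adic cpodd podd); rewrite -K2 E3.
have tm : t = 2 ^ m.+1 by rewrite /t ms.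
have sz : s = m + 2.
  by rewrite -[s]prednK // -subn1 -ms addn2.
have ct : c = t.+1 by rewrite /c addn1 tm.
have P : \prod_(p <- primes n) (t * logn p n).+1 = c ^ size (primes n).
  apply/eqP; rewrite -(eqn_pmul2l t0) -E3 K2 -tm.
  by rewrite -/s sz.
have a1 : forall p, p \in primes n -> logn p n = 1.
  move=> p pin.
  have c0 : 0 < c by rewrite ct.
  have hc : forall x, x \in primes n -> c <= (t * logn x n).+1.
    by move=> x xin; rewrite ct ltnS leq_pmulr // logn_gt0.
  have := prod_eq_pow c0 hc P pin.
  rewrite ct => /eqP; rewrite eqSS -{2}(muln1 t) eqn_pmul2l // => /eqP.
  done.
right; exists (primes n); split; last split; last split.
- by rewrite -/s sz.
- exact: primes_uniq.
- exact: all_prime_primes.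
- rewrite {1}defn; apply: eq_big_seq => p pin.
  by rewrite a1 // expn1.
Qed.
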